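(* Let $n\ge0$ and $k\ge1$ be integers, $\mathcal{H}$ a separable infinite-dimensional complex Hilbert space with orthonormal basis $\{e_m\}_{m\ge0}$, and $T$ a bounded linear operator on $\mathcal{H}$ such that for some scalars $a_{ij}$ ($0\le i\le n+k$, $0\le j\le n$), $Te_j=\sum_{i=0}^{n+k}a_{ij}e_i$ for $0\le j\le n$ and $Te_j=e_{j+k}$ for $j\ge n+1$. Suppose the matrix $A_1=(a_{ij})_{0\le i,j\le n}$ is a contraction on $\mathbb{C}^{n+1}$ (no contractivity of $T$ itself is assumed). Then $T$ has no non-zero eigenvalue if and only if for every eigenvector $(h_0,\dots,h_n)$ of $A_1$ corresponding to a non-zero eigenvalue, there exists $l\in\{1,\dots,k\}$ with $\sum_{r=0}^{n}a_{n+l,r}h_r\neq0$. *)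

(* Defs.v *)
From mathcomp Require Import all_boot all_algebra.
From mathcomp Require Export complex.
From mathcomp Require Import reals topology normedtype sequences.
Import GRing.Theory Num.Theory numFieldNormedType.Exports.

Set Implicit Arguments.
Unset Strict Implicit.
Unset Printing Implicit Defensive.

Local Open Scope ring_scope.

Section L2.
Variable R : realType.
Local Notation C := R[i].

Definition sqmod (z : C) : R := complex.Re z ^+ 2 + complex.Im z ^+ 2.

(* The model of the separable infinite-dimensional complex Hilbert space:
   H = l^2(N), i.e. sequences x : nat -> C with sum |x_m|^2 < oo. *)
Definition in_l2 (x : nat -> C) : Prop := cvgn (series (fun m => sqmod (x m))).

Definition l2norm2 (x : nat -> C) : R := limn (series (fun m => sqmod (x m))).

Definition ebasis (j : nat) : nat -> C := fun m => (m == j)%:R.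

(* T is a bounded linear operator on H = l^2 (its values outside l^2 are
   irrelevant) *)
Definition bounded_linear_op (T : (nat -> C) -> (nat -> C)) : Prop :=
  [/\ (forall (c : C) x y, in_l2 x -> in_l2 y ->
         T (fun m => c * x m + y m) = (fun m => c * T x m + T y m)),
      (forall x, in_l2 x -> in_l2 (T x)) &
      (exists M : R, forall x, in_l2 x -> l2norm2 (T x) <= M * l2norm2 x)].

Definition op_eigenvalue (T : (nat -> C) -> (nat -> C)) (lam : C) : Prop :=
  exists x : nat -> C, [/\ in_l2 x, x <> (fun _ => 0) & T x = (fun m => lam * x m)].

Definition mx_contraction (n : nat) (A : 'M[C]_n) : Prop :=
  forall v : 'cV[C]_n,
    \sum_(i < n) sqmod ((A *m v) i 0) <= \sum_(i < n) sqmod (v i 0).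

End L2.

(* Main.v *)
Require Import Defs.
From mathcomp Require Import all_boot all_order all_algebra.
From mathcomp Require Import complex.
From mathcomp Require Import boolp classical_sets reals topology normedtype sequences.
From mathcomp Require Import ring lra zify.
Import Order.TTheory GRing.Theory Num.Theory numFieldNormedType.Exports.
Local Open Scope classical_set_scope.
Local Open Scope ring_scope.
Set Implicit Arguments.
Section S.
Variable R : realType.
Local Notation C := R[i].
Lemma sqmod_ge0 (z : C) : 0 <= sqmod z.
Proof. rewrite /sqmod; apply: addr_ge0; exact: sqr_ge0. Qed.
Lemma sqmodM (z w : C) : sqmod (z * w) = sqmod z * sqmod w.
Proof. case: z => a b; case: w => c d; rewrite /sqmod /=. ring. Qed.
Lemma sqmod_eq0 (z : C) : (sqmod z == 0) = (z == 0).
Proof.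
case: z => a b; rewrite /sqmod /= paddr_eq0 ?sqr_ge0 // !sqrf_eq0.
apply/andP/eqP => [[/eqP-> /eqP->]//|[-> ->]]; by [].
Qed.
Lemma sqmod_gt0 (z : C) : z != 0 -> 0 < sqmod z.
Proof. by move=> hz; rewrite lt0r sqmod_ge0 andbT sqmod_eq0. Qed.
Local Notation S x := (series (fun m => sqmod (x m))).
Lemma SE (x : nat -> C) N : S x N = \sum_(0 <= m < N) sqmod (x m).
Proof. by rewrite seriesEnat. Qed.
Lemma S_nd (x : nat -> C) : nondecreasing_seq (S x).
Proof. rewrite seriesEnat; apply: (@nondecreasing_series _ _ predT) => *; exact: sqmod_ge0. Qed.
Lemma l2_bound (x : nat -> C) B : (forall N, S x N <= B) -> in_l2 x.
Proof.
move=> hB; apply: nondecreasing_is_cvgn; first exact: S_nd.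
by exists B => _ [N _ <-]; exact: hB.
Qed.
Lemma l2_le (x : nat -> C) N : in_l2 x -> S x N <= l2norm2 x.
Proof. move=> hx; exact: nondecreasing_cvgn_le (S_nd x) hx N. Qed.
Lemma l2norm2_ge0 (x : nat -> C) : in_l2 x -> 0 <= l2norm2 x.
Proof. move=> hx; apply: le_trans (l2_le 0 hx); by rewrite SE big_geq. Qed.
Lemma sqmod_le_l2 (x : nat -> C) m : in_l2 x -> sqmod (x m) <= l2norm2 x.
Proof.
move=> hx; apply: le_trans (l2_le m.+1 hx).
rewrite SE big_nat_recr //= lerDr; apply: sumr_ge0 => *; exact: sqmod_ge0.
Qed.
Lemma l2_dom (x y : nat -> C) : in_l2 x -> (forall m, sqmod (y m) <= sqmod (x m)) -> in_l2 y.
Proof.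
move=> hx hd; apply: (@l2_bound _ (l2norm2 x)) => N; apply: le_trans (l2_le N hx).
rewrite !SE; apply: ler_sum => *; exact: hd.
Qed.
Lemma l2_fin (x : nat -> C) P : (forall m, (P <= m)%N -> x m = 0) -> in_l2 x.
Proof.
move=> h0; apply: (@l2_bound _ (\sum_(0 <= m < P) sqmod (x m))) => N.
rewrite SE; have [NP|PN] := leqP N P.
  rewrite (big_cat_nat (leq0n N) NP) /= lerDl; apply: sumr_ge0 => *; exact: sqmod_ge0.
rewrite (big_cat_nat (leq0n P) (ltnW PN)) /=.
rewrite [X in _ + X]big_nat_cond [X in _ + X]big1 ?addr0 //.
move=> m /andP[/andP[Pm _] _]; rewrite h0 //.
by rewrite /sqmod /= expr0n /= addr0.
Qed.
Definition tail (N : nat) (x : nat -> C) : nat -> C := fun m => if (N <= m)%N then x m else 0.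
Lemma sqmod0 : sqmod (0 : C) = 0.
Proof. by rewrite /sqmod /= expr0n /= addr0. Qed.
Lemma tail_l2 N (x : nat -> C) : in_l2 x -> in_l2 (tail N x).
Proof.
move=> hx; apply: l2_dom hx _ => m; rewrite /tail; case: ifP => // _.
rewrite sqmod0; exact: sqmod_ge0.
Qed.
Lemma tail_norm N (x : nat -> C) : in_l2 x -> l2norm2 (tail N x) <= l2norm2 x - S x N.
Proof.
move=> hx; apply: limr_le; first exact: tail_l2.
apply: nearW => p /=; rewrite SE.
have [pN|Np] := leqP p N.
  rewrite big_nat_cond big1 ?subr_ge0 ?(l2_le _ hx) //.
  move=> m /andP[/andP[_ mp] _]; rewrite /tail; case: ifP => [Nm|_]; last exact: sqmod0.
  by have := leq_trans (leq_ltn_trans Nm mp) pN; rewrite ltnn.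
rewrite (big_cat_nat (leq0n N) (ltnW Np)) /=.
rewrite [X in X + _]big_nat_cond [X in X + _]big1 ?add0r.
  apply: le_trans (_ : S x p - S x N <= _); last by rewrite lerB // (l2_le _ hx).
  rewrite !SE (big_cat_nat (leq0n N) (ltnW Np)) /= addrC addrK.
  by apply: ler_sum_nat => m /andP[Nm _]; rewrite /tail Nm.
move=> m /andP[/andP[_ mN] _]; rewrite /tail leqNgt mN; exact: sqmod0.
Qed.
Lemma tail_cvg (x : nat -> C) : in_l2 x -> (fun N => l2norm2 x - S x N) @ \oo --> 0.
Proof.
move=> hx; rewrite -(subrr (l2norm2 x)); apply: cvgB; first exact: cvg_cst.
exact: hx.
Qed.
End S.
Arguments tail {R}.
Section Op.
Variables (R : realType) (n k : nat) (a : nat -> nat -> R[i]) (T : (nat -> R[i]) -> (nat -> R[i])).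
Hypothesis hT : bounded_linear_op T.
Local Notation S x := (series (fun m => sqmod (x m))).
Hypothesis hTlow : forall j : nat, (j <= n)%N ->
     T (ebasis R j) = (fun i => \sum_(0 <= i' < n + k + 1) a i' j * ebasis R i' i).
Hypothesis hThigh : forall j : nat, (n + 1 <= j)%N -> T (ebasis R j) = ebasis R (j + k).

Lemma T_lin c x y m : in_l2 x -> in_l2 y -> T (fun m => c * x m + y m) m = c * T x m + T y m.
Proof. by case: hT => hl _ _ hx hy; rewrite hl. Qed.

Lemma sum_delta (F : nat -> R[i]) N m :
  \sum_(0 <= i < N) F i * (m == i)%:R = if (m < N)%N then F m else 0.
Proof.
have -> : \sum_(0 <= i < N) F i * (m == i)%:R = \sum_(0 <= i < N | i == m) F i.
  rewrite [RHS]big_mkcond /=; apply: eq_bigr => i _; rewrite eq_sym.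
  by case: eqP => _; rewrite ?mulr1 ?mulr0.
by rewrite big_nat1_eq.
Qed.

Lemma Te j m : T (ebasis R j) m =
  if (j <= n)%N then (if (m < n + k + 1)%N then a m j else 0) else (m == j + k)%:R.
Proof.
case: ifP => hj.
  by rewrite hTlow // /ebasis sum_delta.
by rewrite hThigh ?addn1 // ltnNge hj.
Qed.

Lemma e_l2 j : in_l2 (ebasis R j).
Proof. apply: (@l2_fin _ _ j.+1) => m hm; rewrite /ebasis; case: eqP => // e; subst; by rewrite ltnn in hm. Qed.

Lemma decomp x N m : in_l2 x ->
  T x m = \sum_(0 <= j < N) x j * T (ebasis R j) m + T (tail N x) m.
Proof.
move=> hx; elim: N => [|N IH].
  by rewrite big_geq // add0r; congr (T _ m); apply: funext => p.
rewrite IH big_nat_recr //= -addrA; congr (_ + _).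
have -> : tail N x = (fun p => x N * ebasis R N p + tail N.+1 x p).
  apply: funext => p; rewrite /tail /ebasis.
  by case: (ltngtP N p) => h; rewrite ?mulr0 ?mulr1 ?add0r ?addr0 // h.
by rewrite T_lin //; [exact: e_l2 | exact: tail_l2].
Qed.
Lemma tail_stable x m N : in_l2 x -> (m + n < N)%N -> T (tail N x) m = T (tail N.+1 x) m.
Proof.
move=> hx hN; have := decomp N.+1 m (tail_l2 N hx).
rewrite big_nat_recr //= Te.
have -> : (N <= n)%N = false by lia.
have -> : (m == N + k) = false by apply/eqP; lia.
rewrite mulr0 addr0 big_nat_cond big1 ?add0r.
  by move=> ->; congr (T _ m); apply: funext => p; rewrite /tail; case: ifP => h //; rewrite (leq_trans _ h).
move=> j /andP[/andP[_ hj] _]; rewrite /tail leqNgt hj /= mul0r //.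
Qed.
Lemma tail_zero x m : in_l2 x -> T (tail (m + n).+1 x) m = 0.
Proof.
move=> hx; set N0 := (m + n).+1; set d := T (tail N0 x) m.
have hd : forall N, (N0 <= N)%N -> T (tail N x) m = d.
  elim=> [|N IH]; first by rewrite leqn0.
  rewrite leq_eqVlt => /orP[/eqP <- //|h].
  by rewrite -tail_stable // ?IH //; lia.
case: hT => _ hl2 [M hM].
set M' := Num.max M 0.
have hb : forall N, (N0 <= N)%N -> sqmod d <= M' * (l2norm2 x - S x N).
  move=> N hN; rewrite -(hd N hN).
  have ht := tail_l2 N hx.
  apply: le_trans (sqmod_le_l2 m (hl2 _ ht)) _.
  apply: le_trans (hM _ ht) _.
  have h0 := l2norm2_ge0 ht.
  apply: le_trans (_ : M' * l2norm2 (tail N x) <= _).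
    by apply: ler_wpM2r => //; rewrite le_max lexx.
  by apply: ler_wpM2l; [rewrite le_max lexx orbT | exact: tail_norm].
have hc : (fun N => M' * (l2norm2 x - S x N)) @ \oo --> M' * 0.
  by apply: cvgMr; exact: tail_cvg.
have : sqmod d <= 0.
  rewrite -(mulr0 M') -(cvg_lim _ hc) //.
  apply: limr_ge; first by apply/cvg_ex; eexists; exact: hc.
  by exists N0 => // N /= hN; exact: hb.
move=> hle; apply/eqP; rewrite -sqmod_eq0 eq_le hle sqmod_ge0 //.
Qed.
Lemma Tcoord x m : in_l2 x -> T x m =
  (if (m < n + k + 1)%N then \sum_(j < n.+1) a m j * x j else 0) +
  (if (n + 1 + k <= m)%N then x (m - k)%N else 0).
Proof.
move=> hx; rewrite (decomp (m + n).+1 m hx) tail_zero // addr0.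
rewrite (big_cat_nat (_ : 0 <= n.+1)%N) //=; last by lia.
congr (_ + _).
  rewrite -(big_mkord xpredT (fun j => a m j * x j)).
  case: ifP => hm.
    by apply: eq_big_nat => j hj; rewrite Te ifT ?hm 1?mulrC //; lia.
  by rewrite big_nat_cond big1 // => j /andP[hj _]; rewrite Te ifT ?hm ?mulr0 //; lia.
have -> : \sum_(n.+1 <= i < (m + n).+1) x i * T (ebasis R i) m =
          \sum_(n.+1 <= i < (m + n).+1 | i == (m - k)%N) (if (k <= m)%N then x i else 0).
  rewrite [RHS]big_mkcond /=; apply: eq_big_nat => j hj.
  rewrite Te ifF; last by lia.
  case: (boolP (m == j + k)) => /eqP h.
    by rewrite ifT ?ifT ?mulr1 //; [apply/eqP|]; lia.
  rewrite mulr0; case: eqP => // hj2; case: ifP => // hk; lia.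
rewrite big_nat1_eq.
case: (leqP (n + 1 + k) m) => h.
  by rewrite ifT ?ifT //; lia.
case: ifP => // h2; case: ifP => // h3; lia.
Qed.
End Op.
Unset Implicit Arguments.
Theorem corollary4p2 (R : realType) (n k : nat) (hk : (1 <= k)%N)
  (a : nat -> nat -> R[i]) (T : (nat -> R[i]) -> (nat -> R[i]))
  (hT : bounded_linear_op T)
  (hTlow : forall j : nat, (j <= n)%N ->
     T (ebasis R j) = (fun i => \sum_(0 <= i' < n + k + 1) a i' j * ebasis R i' i))
  (hThigh : forall j : nat, (n + 1 <= j)%N -> T (ebasis R j) = ebasis R (j + k))
  (hA1 : mx_contraction (\matrix_(i < n.+1, j < n.+1) a i j)) :
  (forall lam : R[i], lam != 0 -> ~ op_eigenvalue T lam) <->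
  (forall (lam : R[i]) (h : 'cV[R[i]]_n.+1),
      lam != 0 -> h != 0 ->
      (\matrix_(i < n.+1, j < n.+1) a i j) *m h = lam *: h ->
      exists l : nat, [/\ (1 <= l)%N, (l <= k)%N &
        \sum_(r < n.+1) a (n + l)%N r * h r 0 != 0]).
Proof.
have TC := @Tcoord R n k a T hT hTlow hThigh.
split.
- move=> hno lam h hl hh hA.
  case: (pselect (exists l : nat, [/\ (1 <= l)%N, (l <= k)%N &
        \sum_(r < n.+1) a (n + l)%N r * h r 0 != 0])) => // hne.
  exfalso; apply: (hno lam hl).
  pose x := fun m => if (m < n.+1)%N then h (inord m) 0 else 0.
  have hxj : forall j : 'I_n.+1, x j = h j 0.
    by move=> j; rewrite /x ltn_ord inord_val.
  have [i0 hi0] : exists i, h i 0 != 0.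
    apply: contrapT => hn; move/negP: hh; apply; apply/eqP/matrixP => i j.
    rewrite (ord1 j) mxE; apply/eqP; apply: contrapT => hi; apply: hn; by exists i; apply/negP.
  have hx : in_l2 x.
    apply: (@l2_fin _ _ n.+1) => m hm. by rewrite /x ltnNge hm.
  exists x; split => //.
    by move=> /(congr1 (fun f => f (i0 : nat))); rewrite hxj; apply/eqP.
  apply: funext => m; rewrite TC //.
  have hsum : forall p, \sum_(j < n.+1) a p j * x j = \sum_(j < n.+1) a p j * h j 0.
    by move=> p; apply: eq_bigr => j _; rewrite hxj.
  case: (ltnP m n.+1) => hm.
    rewrite ifT; last by lia.
    rewrite ifF; last by lia.
    rewrite addr0 hsum /x hm.
    have := congr1 (fun M : 'M[R[i]]_(n.+1,1) => M (inord m) 0) hA; rewrite !mxE => <-.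
    by apply: eq_bigr => j _; rewrite !mxE inordK.
  case: (ltnP m (n + k + 1)) => hm2.
    rewrite ifF; last by lia.
    rewrite addr0 hsum /x ltnNge hm /= mulr0.
    have -> : m = (n + (m - n))%N by lia.
    apply/eqP; apply: contrapT => hne2; apply: hne; exists (m - n)%N; split => //; try lia.
    by apply/negP.
  rewrite ifT; last by lia.
  have h1 : (m - k < n.+1)%N = false by lia.
  have h2 : (m < n.+1)%N = false by lia.
  by rewrite add0r /x h1 h2 mulr0.
- move=> hR lam hl [x [hx hx0 hTx]].
  have eq m : lam * x m = (if (m < n + k + 1)%N then \sum_(j < n.+1) a m j * x j else 0) +
    (if (n + 1 + k <= m)%N then x (m - k)%N else 0).
    by rewrite -TC // hTx.
  pose h : 'cV[R[i]]_n.+1 := \col_(i < n.+1) x i.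
  have hA : (\matrix_(i < n.+1, j < n.+1) a i j) *m h = lam *: h.
    apply/matrixP => i j; rewrite (ord1 j) !mxE eq ifT; last by have := ltn_ord i; lia.
    rewrite ifF; last by have := ltn_ord i; lia.
    by rewrite addr0; apply: eq_bigr => r _; rewrite !mxE.
  have hlow : forall l, (1 <= l)%N -> (l <= k)%N ->
      lam * x (n + l)%N = \sum_(r < n.+1) a (n + l)%N r * h r 0.
    move=> l h1 h2; rewrite eq ifT; last by lia.
    rewrite ifF; last by lia.
    by rewrite addr0; apply: eq_bigr => r _; rewrite mxE.
  case: (boolP (h == 0)) => hh.
    apply: hx0; apply: funext => m; elim: m {-2}m (leqnn m) => [|M IH] m hm.
      by have := congr1 (fun A : 'M[R[i]]_(n.+1,1) => A ord0 0) (eqP hh); rewrite !mxE; move: hm; rewrite leqn0 => /eqP ->.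
    case: (ltnP m n.+1) => hm1.
      by have := congr1 (fun A : 'M[R[i]]_(n.+1,1) => A (inord m) 0) (eqP hh); rewrite !mxE inordK.
    case: (ltnP m (n + k + 1)) => hm2.
      have := hlow (m - n)%N; rewrite (_ : (n + (m - n))%N = m); last by lia.
      move=> /(_ ltac:(lia) ltac:(lia)).
      rewrite (eqP hh) big1 => [/eqP|r _]; last by rewrite mxE mulr0.
      by rewrite mulf_eq0 (negbTE hl) => /eqP.
    have := eq m; rewrite ifF; last by lia.
    rewrite ifT; last by lia.
    have -> : x (m - k)%N = 0 by apply: IH; lia.
    rewrite add0r.
    by move/eqP; rewrite mulf_eq0 (negbTE hl) => /eqP.
  have [l [h1 h2 hne]] := hR lam h hl hh hA.
  set m0 := (n + l)%N.
  have hxm0 : x m0 != 0.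
    by apply: contraNneq hne => hz; rewrite -hlow // hz mulr0.
  have hs : 0 < \sum_(i < n.+1) sqmod (h i 0).
    have [i0 hi0] : exists i, h i 0 != 0.
      apply: contrapT => hn; move/negP: hh; apply; apply/eqP/matrixP => i j.
      rewrite (ord1 j) !mxE; apply/eqP; apply: contrapT => hi; apply: hn; exists i; rewrite mxE; exact/negP.
    rewrite (bigD1 i0) //=; apply: ltr_pwDl; first exact: sqmod_gt0.
    apply: sumr_ge0 => *; exact: sqmod_ge0.
  have hlam : sqmod lam <= 1.
    have := hA1 h; rewrite hA.
    under eq_bigr do rewrite mxE sqmodM.
    by rewrite -mulr_sumr -{2}(mul1r (\sum_(i < n.+1) _)) ler_pM2r.
  have grow : forall p, sqmod (x m0) <= sqmod (x (m0 + p * k)%N).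
    elim=> [|p IH]; first by rewrite mul0n addn0.
    apply: le_trans IH _.
    have := eq (m0 + p.+1 * k)%N; rewrite ifF; last by lia.
    rewrite ifT; last by lia.
    rewrite add0r (_ : (m0 + p.+1 * k - k = m0 + p * k)%N); last by rewrite mulSn; lia.
    move=> <-; rewrite sqmodM; apply: ler_piMl => //; exact: sqmod_ge0.
  have c0 := cvg_series_cvg_0 hx.
  have [N _ hN] := cvgr_lt _ c0 _ (@sqmod_gt0 R _ hxm0).
  have := hN (m0 + N * k)%N; rewrite /= => /(_ ltac:(nia)).
  by rewrite ltNge grow.
Qed.
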